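(* Let $n\ge 3$, let $G_1$ be the star graph on $n$ nodes with Laplacian $Q_1$, and let $G_1^c$ be its complement, with Laplacian $nI-J-Q_1$ ($J$ the $n\times n$ all-one matrix). For $p\ge0$ let $$Q(p)=\begin{bmatrix} Q_1+npI & -pJ\\ -pJ & nI-J-Q_1+npI\end{bmatrix},$$ with eigenvalues $0=\mu_N(p)\le\mu_{N-1}(p)\le\mu_{N-2}(p)\le\dots\le\mu_1(p)$, $N=2n$. Then for every $p>0$ the eigenvalue $2np$ of $Q(p)$ is not the second smallest eigenvalue, i.e. $\mu_{N-1}(p)\neq 2np$ (so no structural transition of the algebraic connectivity exists); moreover, $\mu_{N-2}(p)=2np$ if and only if $0<p\le \frac1n$, i.e. the transition of the third smallest eigenvalue occurs at $p^*_{N-2}=\frac1n$.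
   Context: $2np$ is an eigenvalue of $Q(p)$ with eigenvector $[u^T,-u^T]^T$, $u$ the all-one vector. $Q(p)$ is the Laplacian of the star coupled to its (disconnected) complement by an $n$-to-$n$ interconnection of weight $p$. *)

(* Defs.v *)
From mathcomp Require Import all_boot all_order all_algebra.
Set Implicit Arguments. Unset Strict Implicit. Unset Printing Implicit Defensive.
Import Order.TTheory GRing.Theory Num.Theory.
Local Open Scope ring_scope.

Definition laplacian (R : pzRingType) (m : nat) (A : 'M[R]_m) : 'M[R]_m :=
  \matrix_(i, j) ((if i == j then \sum_(k < m) A i k else 0) - A i j).

Definition star_adj (R : pzRingType) (n : nat) : 'M[R]_n :=
  \matrix_(i, j) (if (val i == 0%N) != (val j == 0%N) then 1 else 0).

Definition Q1 (R : pzRingType) (n : nat) : 'M[R]_n := laplacian (star_adj R n).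

Definition Jmx (R : pzRingType) (n : nat) : 'M[R]_n := const_mx 1.

Definition Qp (R : pzRingType) (n : nat) (p : R) : 'M[R]_(n + n) :=
  block_mx (Q1 R n + (n%:R * p)%:M) (- (p *: Jmx R n))
           (- (p *: Jmx R n)) ((n%:R)%:M - Jmx R n - Q1 R n + (n%:R * p)%:M).

(* s is the list of eigenvalues (with algebraic multiplicity) of the square
   matrix M, listed in nondecreasing order: s = [mu_N; mu_{N-1}; ...; mu_1]. *)
Definition asc_eigenvalues (R : realFieldType) (m : nat) (M : 'M[R]_m)
    (s : seq R) : Prop :=
  [/\ size s = m, sorted <=%R s & char_poly M = \prod_(x <- s) ('X - x%:P)].

(* Main.v *)
Require Import Defs.
From mathcomp Require Import all_boot all_order all_algebra.
From mathcomp Require Import ring lra.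
Set Implicit Arguments. Unset Strict Implicit. Unset Printing Implicit Defensive.
Import Order.TTheory GRing.Theory Num.Theory.
Local Open Scope ring_scope.

Section Gen.
Variable T : comPzRingType.

Lemma syl_det N k (Dx : 'M[T]_N) (U : 'M_(N,k)) (V : 'M_(k,N)) (D : 'M_k) :
  Dx *m U = U *m D ->
  \det (Dx - U *m V) * \det D = \det Dx * \det (D - V *m U).
Proof.
move=> hDU.
have e1 : block_mx 1%:M U 0 1%:M *m block_mx (Dx - U *m V) 0 V 1%:M
          = block_mx Dx U V 1%:M.
  by rewrite mulmx_block ?mul1mx ?mul0mx ?mulmx1 ?mulmx0 ?add0r ?addr0 subrK.
have e2 : block_mx Dx U V 1%:M *m block_mx 1%:M (-U) 0 D
          = block_mx Dx 0 V (D - V *m U).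
  by rewrite mulmx_block ?mulmx1 ?mulmx0 ?mul1mx ?mul0mx ?addr0 ?mulmxN hDU addNr addrC.
have := congr1 determinant e2; rewrite det_mulmx det_lblock det_ublock det1 mul1r.
by rewrite -e1 det_mulmx det_ublock det_lblock !det1 !mul1r mulr1.
Qed.

Lemma schur_det m1 m2 (A : 'M[T]_m1) (B : 'M_(m1,m2)) (C : 'M_(m2,m1)) d :
  \det (block_mx A B C d%:M) * d ^+ m1 = \det (d *: A - B *m C) * d ^+ m2.
Proof.
have e : block_mx A B C d%:M *m block_mx d%:M 0 (-C) 1%:M
         = block_mx (d *: A - B *m C) B 0 d%:M.
  rewrite mulmx_block !mulmx0 !mulmx1 !add0r !mulmxN !mul_mx_scalar mul_scalar_mx.
  by rewrite subrr.
have := congr1 determinant e.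
by rewrite det_mulmx det_lblock det_ublock det1 !det_scalar mulr1.
Qed.

Definition mx2 (a b c d : T) : 'M[T]_2 :=
  \matrix_(i < 2, j < 2) if val i == 0%N then (if val j == 0%N then a else b)
                          else (if val j == 0%N then c else d).

Lemma mx2_congr a b c d a' b' c' d' :
  a = a' -> b = b' -> c = c' -> d = d' -> mx2 a b c d = mx2 a' b' c' d'.
Proof. by move=> -> -> -> ->. Qed.

Lemma det_mx2 a b c d : \det (mx2 a b c d) = a * d - b * c.
Proof.
rewrite (expand_det_row _ ord0) !big_ord_recl big_ord0 /cofactor !det_mx11 !mxE /=.
rewrite !expr0 !expr1; ring.
Qed.

Lemma mul_mx2 a b c d a' b' c' d' :
  mx2 a b c d *m mx2 a' b' c' d' =
  mx2 (a * a' + b * c') (a * b' + b * d') (c * a' + d * c') (c * b' + d * d').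
Proof.
apply/matrixP => i j; rewrite !mxE !big_ord_recl big_ord0 !mxE /=.
by case: (val i == 0%N); case: (val j == 0%N); rewrite ?addr0.
Qed.

Lemma add_mx2 a b c d a' b' c' d' :
  mx2 a b c d + mx2 a' b' c' d' = mx2 (a + a') (b + b') (c + c') (d + d').
Proof. by apply/matrixP => i j; rewrite !mxE; case: (val i == 0%N); case: (val j == 0%N). Qed.

Lemma opp_mx2 a b c d : - mx2 a b c d = mx2 (-a) (-b) (-c) (-d).
Proof. by apply/matrixP => i j; rewrite !mxE; case: (val i == 0%N); case: (val j == 0%N). Qed.

Lemma scale_mx2 k a b c d : k *: mx2 a b c d = mx2 (k*a) (k*b) (k*c) (k*d).
Proof. by apply/matrixP => i j; rewrite !mxE; case: (val i == 0%N); case: (val j == 0%N). Qed.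

Lemma scalar_mx2 a : a%:M = mx2 a 0 0 a.
Proof.
apply/matrixP => i j; rewrite !mxE.
by case: i => -[|[|//]] ?; case: j => -[|[|//]] ? /=; rewrite ?mulr1n ?mulr0n.
Qed.
End Gen.

Lemma map_mx2 (T S : comPzRingType) (f : {rmorphism T -> S}) a b c d :
  map_mx f (mx2 a b c d) = mx2 (f a) (f b) (f c) (f d).
Proof. by apply/matrixP => i j; rewrite !mxE; case: (val i == 0%N); case: (val j == 0%N). Qed.

Section Decomp.
Variable T : comPzRingType.
Variable n : nat.
Local Notation N := n.+1.

Definition U1 : 'M[T]_(N, 2) :=
  \matrix_(i, a) if val a == 0%N then (val i == 0%N)%:R else 1.

Definition ee (i : 'I_N) : T := (val i == 0%N)%:R.

Lemma quad a b c d i j :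
  (U1 *m mx2 a b c d *m U1^T) i j = a * ee i * ee j + b * ee i + c * ee j + d.
Proof.
rewrite !mxE !big_ord_recl !big_ord0 !mxE !big_ord_recl !big_ord0 !mxE /= /ee.
ring.
Qed.

Lemma sum_star (i : 'I_N) :
  \sum_(k < N) star_adj T N i k = if val i == 0%N then n%:R else 1.
Proof.
rewrite big_ord_recl /= mxE /=.
under eq_bigr => k _ do rewrite mxE /= eqbF_neg negbK.
case: (val i == 0%N) => /=.
  by rewrite sumr_const card_ord add0r.
by rewrite big1 // addr0.
Qed.

Lemma ord_eq0 (i j : 'I_N) : val i == 0%N -> val j == 0%N -> i = j.
Proof. by move=> /eqP hi /eqP hj; apply: val_inj; rewrite hi hj. Qed.

Definition K1 : 'M[T]_2 := mx2 N%:R (-1) (-1) 0.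
Definition K2 : 'M[T]_2 := mx2 (- N%:R) 1 1 (-1).
Definition Kp (p : T) : 'M[T]_2 := mx2 0 0 0 (-p).

Lemma blk1 p :
  Q1 T N + (N%:R * p)%:M = (1 + N%:R * p)%:M + U1 *m K1 *m U1^T.
Proof.
apply/matrixP => i j; rewrite [in RHS]mxE quad /Q1 /laplacian !mxE sum_star /ee.
case: (eqVneq i j) => [<-|ij].
  rewrite ?eqxx /=; case: (val i == 0%N) => /=; rewrite ?mulr1n; ring.
rewrite /=.
case hi: (val i == 0%N); case hj: (val j == 0%N) => /=; rewrite ?mulr0n.
- by rewrite (ord_eq0 hi hj) eqxx in ij.
- ring.
- ring.
- ring.
Qed.

Lemma blk2 p : - (p *: Jmx T N) = U1 *m Kp p *m U1^T.
Proof.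
apply/matrixP => i j; rewrite quad !mxE; ring.
Qed.

Lemma blk3 p :
  (N%:R)%:M - Jmx T N - Q1 T N + (N%:R * p)%:M
  = (N%:R - 1 + N%:R * p)%:M + U1 *m K2 *m U1^T.
Proof.
apply/matrixP => i j; rewrite [in RHS]mxE quad /Q1 /laplacian !mxE sum_star /ee.
case: (eqVneq i j) => [<-|ij].
  rewrite ?eqxx /=; case: (val i == 0%N) => /=; rewrite ?mulr1n; ring.
rewrite /=.
case hi: (val i == 0%N); case hj: (val j == 0%N) => /=; rewrite ?mulr0n.
- by rewrite (ord_eq0 hi hj) eqxx in ij.
- ring.
- ring.
- ring.
Qed.

End Decomp.

Lemma scalar_mxB' (T : pzRingType) m (a b : T) : (a - b)%:M = a%:M - b%:M :> 'M_m.
Proof. by apply/matrixP => i j; rewrite !mxE mulrnBl. Qed.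

Section Assemble.
Variable T : comPzRingType.
Variable n : nat.
Local Notation N := n.+1.

Definition Ub : 'M[T]_(N + N, 2 + 2) := block_mx (@U1 T n) 0 0 (@U1 T n).
Definition Kb (p : T) : 'M[T]_(2 + 2) := block_mx (@K1 T n) (Kp p) (Kp p) (@K2 T n).

Lemma decomp p :
  @Qp T N p = block_mx ((1 + N%:R * p)%:M) 0 0 ((N%:R - 1 + N%:R * p)%:M)
             + Ub *m Kb p *m Ub^T.
Proof.
rewrite /Qp /Ub /Kb tr_block_mx !trmx0 !mulmx_block.
rewrite ?mulmx0 ?mul0mx ?addr0 ?add0r add_block_mx ?add0r.
by rewrite blk1 blk2 blk3.
Qed.

Lemma gram : (@U1 T n)^T *m (@U1 T n) = mx2 1 1 1 N%:R.
Proof.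
apply/matrixP => a b; rewrite !mxE big_ord_recl !mxE /=.
under eq_bigr => k _ do rewrite !mxE /=.
case: a => -[|[|//]] ?; case: b => -[|[|//]] ? /=.
all: rewrite ?mulr1 ?mul1r ?mul0r ?mulr0.
- by rewrite big1 ?addr0.
- by rewrite big1 ?addr0.
- by rewrite big1 ?addr0.
- by rewrite sumr_const card_ord -mulrS.
Qed.
End Assemble.

Section Char.
Variable R : fieldType.
Variable n : nat.
Local Notation N := n.+2.
Variable p : R.

Local Notation P := (@polyC R).

Lemma charQ :
  char_poly (@Qp R N p) =
  ('X - P (1 + N%:R * p)) ^+ n * ('X - P (N%:R - 1 + N%:R * p)) ^+ n *
  ('X * ('X - P (N%:R * p)) * ('X - P (2%:R * N%:R * p)) * ('X - P (N%:R + N%:R * p))).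
Proof.
set a1 := 1 + N%:R * p; set a2 := N%:R - 1 + N%:R * p.
set d1 := 'X - P a1; set d2 := 'X - P a2.
set Ubp := map_mx P (@Ub R n.+1).
set V := map_mx P (Kb n.+1 p) *m Ubp^T.
set Dx : 'M[{poly R}]_(N + N) := block_mx d1%:M 0 0 d2%:M.
set D : 'M[{poly R}]_(2 + 2) := block_mx d1%:M 0 0 d2%:M.
have hcm : char_poly_mx (@Qp R N p) = Dx - Ubp *m V.
  rewrite /char_poly_mx decomp map_mxD !map_mxM map_block_mx !map_scalar_mx !map_mx0.
  rewrite -map_trmx /V mulmxA (scalar_mx_block N N) opprD addrA; congr (_ - _).
  by rewrite opp_block_mx add_block_mx !oppr0 !addr0 -!scalar_mxB'.
have hDU : Dx *m Ubp = Ubp *m D.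
  rewrite /Ubp /Ub map_block_mx !map_mx0 /Dx /D !mulmx_block.
  by rewrite ?mulmx0 ?mul0mx ?addr0 ?add0r !mul_scalar_mx !mul_mx_scalar.
have := syl_det V hDU; rewrite -hcm -/(char_poly _).
set G := mx2 (1 : R) 1 1 N%:R.
have hVU : V *m Ubp = map_mx P (block_mx (@K1 R n.+1 *m G) (Kp p *m G)
                                    (Kp p *m G) (@K2 R n.+1 *m G)).
  rewrite /V /Ubp map_trmx -mulmxA -!map_mxM; congr map_mx.
  rewrite /Ub /Kb tr_block_mx !trmx0 !mulmx_block ?mulmx0 ?mul0mx ?addr0 ?add0r.
  by rewrite gram !mulmx0 ?addr0 ?add0r.
set dd := 'X - P (N%:R * p).
set A := mx2 ('X - P (N%:R + N%:R * p)) 0 1 dd.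
set B := mx2 0 0 (P p) (P (N%:R * p)).
have hL : D - V *m Ubp = block_mx A B B dd%:M.
  rewrite hVU /D map_block_mx opp_block_mx add_block_mx /K1 /K2 /Kp /G !mul_mx2.
  rewrite !map_mx2 !opp_mx2 !scalar_mx2 !add_mx2 /A /B /dd /d1 /d2 /a1 /a2.
  by congr block_mx; apply/matrixP => i j; rewrite !mxE; case: (val i == 0%N); case: (val j == 0%N); ring.
rewrite hL /D /Dx !det_ublock !det_scalar.
have hdd : dd ^+ 2 != 0 by rewrite expf_neq0 // polyXsubC_eq0.
have hS := schur_det A B B dd.
have hE : \det (block_mx A B B dd%:M) =
    dd * ('X - P (N%:R + N%:R * p)) * (dd * dd - P (N%:R * p) * P (N%:R * p)).
  apply: (mulIf hdd); rewrite hS /A /B scale_mx2 mul_mx2 opp_mx2 add_mx2 det_mx2.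
  ring.
rewrite hE => H.
have h12 : d1 ^+ 2 * d2 ^+ 2 != 0.
  by rewrite mulf_neq0 // expf_neq0 // polyXsubC_eq0.
apply: (mulIf h12); rewrite H.
have -> : d1 ^+ N = d1 ^+ n * d1 ^+ 2 by rewrite -exprD addn2.
have -> : d2 ^+ N = d2 ^+ n * d2 ^+ 2 by rewrite -exprD addn2.
rewrite /dd; ring.
Qed.
End Char.

Lemma prod_nseq (R : comPzRingType) (I : Type) (F : I -> R) k (x : I) :
  \prod_(i <- nseq k x) F i = F x ^+ k.
Proof. by elim: k => [|k IH]; rewrite ?big_nil ?expr0 // big_cons IH exprS. Qed.

Lemma head_sorted (R : realDomainType) (s l : seq R) a :
  sorted <=%R s -> perm_eq s (a :: l) -> all (fun x => a <= x) l ->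
  exists s', [/\ s = a :: s', sorted <=%R s' & perm_eq s' l].
Proof.
case: s => [|b s'] hs hp hl; first by have := perm_size hp.
have hb : all (fun x => b <= x) s' by apply: order_path_min => //; exact: le_trans.
have ab : a = b.
  have : a \in b :: s' by rewrite (perm_mem hp) mem_head.
  have : b \in a :: l by rewrite -(perm_mem hp) mem_head.
  rewrite !inE => /orP[/eqP -> //|bl] /orP[/eqP -> //|as'].
  apply/le_anti; apply/andP; split.
    by move/allP: hl => /(_ _ bl).
  by move/allP: hb => /(_ _ as').
subst b; exists s'; split => //; first exact: path_sorted hs.
by rewrite perm_cons in hp.
Qed.

Theorem mainTheorem7 (R : rcfType) (n : nat) (hn : (3 <= n)%N) (p : R)
    (hp : 0 < p) (s : seq R) (hs : asc_eigenvalues (@Qp R n p) s) :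
  s`_1 != 2%:R * n%:R * p /\
  (s`_2 = 2%:R * n%:R * p <-> p <= n%:R^-1).
Proof.
case: n hn hs => [|[|[|m]]] // _ [_ hsort hchar].
set N := m.+3.
have hN : 3 <= N%:R :> R by rewrite (ler_nat R 3 N).
set a := N%:R * p.
have ha : 0 < a by rewrite mulr_gt0 // (lt_le_trans _ hN).
set t := [:: 0; a; 2%:R * N%:R * p; 1 + a] ++ nseq m (1 + a) ++
         nseq m.+1 (N%:R - 1 + a) ++ [:: N%:R + a].
have hperm : perm_eq s t.
  apply: prod_XsubC_eq; rewrite -hchar charQ.
  rewrite /t !big_cat /= !big_cons !big_nil !prod_nseq.
  rewrite /a /N polyC0 subr0 !exprS; ring.
set rest := nseq m (1 + a) ++ nseq m.+1 (N%:R - 1 + a) ++ [:: N%:R + a].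
have e2a : 2%:R * N%:R * p = 2%:R * a by rewrite /a mulrA.
rewrite e2a in t hperm *.
have hrest : forall b, b <= 1 + a -> all (fun x => b <= x) rest.
  move=> b hb; rewrite /rest !all_cat !all_nseq /= andbT.
  rewrite hb orbT /=; apply/andP; split; lra.
have H0 : all (fun x => 0 <= x) [:: a, 2%:R * a, 1 + a & rest].
  rewrite /= hrest ?andbT; last by lra.
  by repeat (apply/andP; split); lra.
have [s1 [e1 hs1 hp1]] := head_sorted hsort hperm H0.
have H1 : all (fun x => a <= x) [:: 2%:R * a, 1 + a & rest].
  rewrite /= hrest ?andbT; last by lra.
  by repeat (apply/andP; split); lra.
have [s2 [e2 hs2 hp2]] := head_sorted hs1 hp1 H1.
rewrite e1 e2 /=; split; first by apply/negP => /eqP h; lra.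
have hN0 : 0 < N%:R :> R by lra.
rewrite -(ler_pM2l hN0) mulfV ?gt_eqF // -/a.
case: (lerP a 1) => hle.
  have H2 : all (fun x => 2%:R * a <= x) [:: 1 + a & rest].
    by rewrite /= hrest ?andbT; lra.
  by have [s3 [-> _ _]] := head_sorted hs2 hp2 H2.
have hp2' : perm_eq s2 [:: 1 + a, 2%:R * a & rest].
  by apply: (perm_trans hp2); apply/permP => f /=; rewrite addnCA.
have H3 : all (fun x => 1 + a <= x) [:: 2%:R * a & rest].
  by rewrite /= hrest ?andbT; lra.
have [s3 [-> _ _]] := head_sorted hs2 hp2' H3.
by rewrite /=; split => h; lra.
Qed.
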